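(* Let $f=p/q$ be a rational function, $p,q$ of degree $l$, positive on the standard simplex $\Delta$, with $b_\alpha(q,j,\Delta)>0$ for all $|\alpha|=j$, $j\ge l$, and with $p$ positive on $\Delta$; let $\underline p=\min_\Delta p$. If \[ k>\frac{l(l-1)}{2}\,\frac{\max_{|\alpha|=l}|b_\alpha(p,l,\Delta)|}{\underline p}, \] then $f$ satisfies the global certificate of positivity $\mathrm{Cert}(b(f,k,\Delta))$: $b_\alpha(f,k,\Delta)\ge0$ for all $|\alpha|=k$ and $b_{k\hat e_i}(f,k,\Delta)>0$ for $i=0,\dots,n$.
   Context: $\Delta$ is the standard simplex in $\mathbb{R}^n$ with barycentric coordinates $\lambda=(1-\sum x_i,x_1,\dots,x_n)$; $B^{(k)}_\alpha=\frac{k!}{\alpha_0!\cdots\alpha_n!}\lambda^\alpha$ ($\alpha\in\mathbb{N}^{n+1}$, $|\alpha|=k$); $b_\alpha(p,k,\Delta)$ are the Bernstein coefficients of $p$ of degree $k$; $b_\alpha(f,k,\Delta)=b_\alpha(p,k,\Delta)/b_\alpha(q,k,\Delta)$; $\hat e_i$ unit vectors of $\mathbb{R}^{n+1}$. *)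

(* Defs.v *)
From HB Require Import structures.
From mathcomp Require Import all_boot all_order all_algebra.
Set Implicit Arguments. Unset Strict Implicit. Unset Printing Implicit Defensive.
Import Order.TTheory GRing.Theory Num.Theory.
Local Open Scope ring_scope.

(* Multi-indices alpha in N^{n+1} with entries <= k (those with |alpha| = k
   are selected by [mdeg alpha == k]). Index 0 corresponds to lambda_0. *)
Definition mindex (n k : nat) := {ffun 'I_n.+1 -> 'I_k.+1}.

Definition mdeg (n k : nat) (a : mindex n k) : nat := (\sum_i (a i : nat))%N.

Definition mvertex (n k : nat) (i : 'I_n.+1) : mindex n k :=
  [ffun j => if j == i then ord_max else ord0].

Definition bary (R : ringType) (n : nat) (x : 'rV[R]_n) (i : 'I_n.+1) : R :=
  match unlift ord0 i with
  | None => 1 - \sum_(j < n) x ord0 j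
  | Some j => x ord0 j
  end.

Definition in_simplex (R : realFieldType) (n : nat) (x : 'rV[R]_n) : Prop :=
  (forall j, 0 <= x ord0 j) /\ \sum_(j < n) x ord0 j <= 1.

Definition bernstein (R : fieldType) (n k : nat) (a : mindex n k)
    (lam : 'I_n.+1 -> R) : R :=
  (k`!)%:R / (\prod_i ((a i : nat)`!))%:R * \prod_i lam i ^+ (a i : nat).

(* [b] is the family of Bernstein coefficients of degree k of p on the
   standard simplex: p = sum_{|alpha|=k} b_alpha B^{(k)}_alpha (as functions,
   i.e. a polynomial identity). By linear independence of the Bernstein basis
   such b is unique, so this characterizes b_alpha(p,k,Delta). *)
Definition bernstein_coeffs (R : realFieldType) (n k : nat)
    (p : 'rV[R]_n -> R) (b : mindex n k -> R) : Prop :=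
  forall x : 'rV[R]_n,
    p x = \sum_(a : mindex n k | mdeg a == k) b a * bernstein a (bary x).

Definition is_min_on_simplex (R : realFieldType) (n : nat)
    (p : 'rV[R]_n -> R) (m : R) : Prop :=
  (exists2 x, in_simplex x & p x = m) /\ (forall x, in_simplex x -> m <= p x).

(* Main.v *)
Require Import Defs.
From HB Require Import structures.
From mathcomp Require Import all_boot all_order all_algebra.
From mathcomp Require Import ring lra zify.
Set Implicit Arguments. Unset Strict Implicit. Unset Printing Implicit Defensive.
Import Order.TTheory GRing.Theory Num.Theory.
Local Open Scope ring_scope.

Section Ident.
Variable R : realFieldType.

Lemma univ_zero (K : nat) (c : 'I_K.+1 -> R) (t0 : R) :
  (forall t, t != t0 -> \sum_(j < K.+1) c j * t ^+ j = 0) -> forall j, c j = 0.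
Proof.
move=> H j.
pose P := \poly_(i < K.+1) c (inord i).
have HP : forall t, P.[t] = \sum_(j < K.+1) c j * t ^+ j.
  by move=> t; rewrite horner_poly; apply: eq_bigr => i _; rewrite inord_val.
suff P0 : P = 0.
  have := congr1 (fun q : {poly R} => q`_j) P0; rewrite coef_poly ltn_ord coef0.
  by rewrite inord_val.
apply/eqP; apply: contraT => nzP.
pose rs := mkseq (fun i => t0 + (i.+1)%:R) K.+1.
have := @max_poly_roots _ _ rs nzP.
have -> : all (root P) rs.
  apply/allP => x /mapP [i _ ->]; rewrite /root HP H //.
  by rewrite -subr_eq0 addrC addKr pnatr_eq0.
have -> : uniq rs.
  rewrite map_inj_uniq ?iota_uniq // => a b /addrI /eqP.
  by rewrite eqr_nat eqSS => /eqP.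
move=> /(_ isT isT); rewrite size_mkseq => h.
by have := leq_trans h (size_poly _ _); rewrite ltnn.
Qed.

Definition vcons m (t : R) (y : 'I_m -> R) : 'I_m.+1 -> R :=
  fun i => match unlift ord0 i with None => t | Some j => y j end.

Definition fcons (T : Type) m (j : T) (a : {ffun 'I_m -> T}) : {ffun 'I_m.+1 -> T} :=
  [ffun i => match unlift ord0 i with None => j | Some i' => a i' end].

Definition ftail (T : Type) m (a : {ffun 'I_m.+1 -> T}) : {ffun 'I_m -> T} :=
  [ffun i => a (lift ord0 i)].

Lemma split_sum (T : finType) m (F : {ffun 'I_m.+1 -> T} -> R) :
  \sum_a F a = \sum_(j : T) \sum_(a : {ffun 'I_m -> T}) F (fcons j a).
Proof.
rewrite pair_big /=.
rewrite (reindex (fun p : T * {ffun 'I_m -> T} => fcons p.1 p.2)) //.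
exists (fun a : {ffun 'I_m.+1 -> T} => (a ord0, ftail a)) => [[j a] _ | a _] /=.
  rewrite /fcons /ftail ffunE unlift_none; congr pair.
  by apply/ffunP => i; rewrite !ffunE liftK.
apply/ffunP => i; rewrite /fcons /ftail ffunE.
case: unliftP => [i' -> | ->]; by rewrite ?ffunE.
Qed.

Lemma prod_cons K m (t : R) (y : 'I_m -> R) (j : 'I_K.+1) (a : {ffun 'I_m -> 'I_K.+1}) :
  \prod_(i < m.+1) vcons t y i ^+ fcons j a i = t ^+ j * \prod_(i < m) y i ^+ a i.
Proof.
rewrite big_ord_recl /vcons /fcons ffunE unlift_none; congr (_ * _).
by apply: eq_bigr => i _; rewrite ffunE liftK.
Qed.

Lemma fcons_tail T m (a : {ffun 'I_m.+1 -> T}) : fcons (a ord0) (ftail a) = a.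
Proof.
apply/ffunP => i; rewrite /fcons /ftail ffunE.
case: unliftP => [i' -> | ->]; by rewrite ?ffunE.
Qed.

Lemma step_ident K m (E : {ffun 'I_m.+1 -> 'I_K.+1} -> R) (t0 : ('I_m -> R) -> R) :
  (forall t y, t != t0 y -> \sum_a E a * \prod_(i < m.+1) vcons t y i ^+ a i = 0) ->
  forall j y, \sum_(a : {ffun 'I_m -> 'I_K.+1}) E (fcons j a) * \prod_(i < m) y i ^+ a i = 0.
Proof.
move=> H j y.
apply: (@univ_zero K (fun j => \sum_(a : {ffun 'I_m -> 'I_K.+1}) E (fcons j a) * \prod_(i < m) y i ^+ a i) (t0 y)) => t /H.
rewrite split_sum => Ht; rewrite -[RHS]Ht; apply: eq_bigr => i _; rewrite mulr_suml; apply: eq_bigr => a _.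
by rewrite prod_cons mulrCA mulrC.
Qed.

Lemma ident_uncond K m (E : {ffun 'I_m -> 'I_K.+1} -> R) :
  (forall y : 'I_m -> R, \sum_a E a * \prod_(i < m) y i ^+ a i = 0) -> forall a, E a = 0.
Proof.
elim: m E => [|m IH] E H a.
  have := H (fun _ => 0).
  rewrite (big_pred1 a) ?big_ord0 ?mulr1 // => b /=.
  by apply/esym/eqP/ffunP => -[].
rewrite -(fcons_tail a).
apply: (IH (fun a' => E (fcons (a ord0) a'))) => y.
apply: (step_ident (t0 := fun _ => 0)) => t y' _; exact: H.
Qed.

Lemma ident_first K m (E : {ffun 'I_m.+1 -> 'I_K.+1} -> R) (t0 : ('I_m -> R) -> R) :
  (forall t y, t != t0 y -> \sum_a E a * \prod_(i < m.+1) vcons t y i ^+ a i = 0) ->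
  forall a, E a = 0.
Proof.
move=> H a; rewrite -(fcons_tail a).
apply: (ident_uncond (E := fun a' => E (fcons (a ord0) a'))) => y.
exact: step_ident H _ _.
Qed.

End Ident.


Section Elev.
Variable R : realFieldType.
Variables n K : nat.
Implicit Types a b : mindex n K.

Definition bern (m : nat) a (lam : 'I_n.+1 -> R) : R :=
  (m`!)%:R / (\prod_i ((a i : nat)`!))%:R * \prod_i lam i ^+ (a i : nat).

Definition inc a (i : 'I_n.+1) : mindex n K :=
  [ffun j => if j == i then inord (a j).+1 else a j].
Definition dec a (i : 'I_n.+1) : mindex n K :=
  [ffun j => if j == i then inord (a j).-1 else a j].

Lemma incE a i j : (a i < K)%N -> (inc a i j : nat) = (a j + (j == i))%N.
Proof.
move=> h; rewrite ffunE; case: eqP => [->|_]; last by rewrite addn0.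
by rewrite inordK ?addn1.
Qed.

Lemma decE a i j : (dec a i j : nat) = (a j - (j == i))%N.
Proof.
rewrite ffunE; case: eqP => [->|_]; last by rewrite subn0.
by rewrite inordK ?subn1 // (leq_ltn_trans (leq_pred _) (ltn_ord _)).
Qed.

Lemma mdeg_inc a i : (a i < K)%N -> mdeg (inc a i) = (mdeg a).+1.
Proof.
move=> h; rewrite /mdeg (bigD1 i) //= [in RHS](bigD1 i) //= incE // eqxx addn1 addSn.
do 2 f_equal; apply: eq_bigr => j /negbTE hj; by rewrite incE // hj addn0.
Qed.

Lemma mdeg_dec a i : (0 < a i)%N -> mdeg (dec a i) = (mdeg a).-1.
Proof.
move=> h; rewrite /mdeg (bigD1 i) //= [in RHS](bigD1 i) //= decE // eqxx subn1.
rewrite -(prednK h) addSn /=.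
f_equal; apply: eq_bigr => j /negbTE hj; by rewrite decE // hj subn0.
Qed.

Lemma dec_inc a i : (a i < K)%N -> dec (inc a i) i = a.
Proof.
move=> h; apply/ffunP => j; apply: val_inj => /=.
by rewrite decE incE // addnK.
Qed.

Lemma inc_dec a i : (0 < a i)%N -> inc (dec a i) i = a.
Proof.
move=> h; apply/ffunP => j; apply: val_inj => /=.
rewrite incE ?decE; last first.
  by rewrite eqxx subn1 -ltnS prednK // ltn_ord.
case: eqP => [->|_]; by rewrite ?subn1 ?addn1 ?prednK ?subn0 ?addn0.
Qed.

Lemma prod_inc a i (G : 'I_n.+1 -> nat -> R) : (a i < K)%N ->
  \prod_j G j (inc a i j) = G i (a i).+1 * \prod_(j | j != i) G j (a j).
Proof.
move=> h; rewrite (bigD1 i) //= incE // eqxx addn1; congr (_ * _).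
by apply: eq_bigr => j /negbTE hj; rewrite incE // hj addn0.
Qed.

Lemma bern_inc m a i lam : (a i < K)%N ->
  bern m a lam * lam i = ((a i).+1)%:R / (m.+1)%:R * bern m.+1 (inc a i) lam.
Proof.
move=> h; rewrite /bern !natr_prod.
rewrite (prod_inc (fun j k => (k`!)%:R)) // (prod_inc (fun j k => lam j ^+ k)) //.
rewrite [\prod_j ((a j)`!)%:R](bigD1 i) //= [\prod_j lam j ^+ a j](bigD1 i) //=.
rewrite !factS !natrM exprS.
have h1 : ((a i)`!)%:R != 0 :> R by rewrite pnatr_eq0 -lt0n fact_gt0.
have h2 : \prod_(j | j != i) ((a j)`!)%:R != 0 :> R.
  by rewrite -natr_prod pnatr_eq0 -lt0n prodn_gt0 // => j; rewrite fact_gt0.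
have h3 : ((a i).+1)%:R != 0 :> R by rewrite pnatr_eq0.
have h4 : (m.+1)%:R != 0 :> R by rewrite pnatr_eq0.
field; by rewrite h1 h2 ![1 + _]addrC !natr1 !pnatr_eq0.
Qed.

Lemma le_mdeg a i : (a i <= mdeg a)%N.
Proof. by rewrite /mdeg (bigD1 i) //= leq_addr. Qed.

Lemma elev m (hm : (m < K)%N) (c : mindex n K -> R) lam (Hs : \sum_i lam i = 1) :
  \sum_(a | mdeg a == m) c a * bern m a lam =
  \sum_(a | mdeg a == m.+1) (\sum_i (a i)%:R / (m.+1)%:R * c (dec a i)) * bern m.+1 a lam.
Proof.
transitivity (\sum_(a | mdeg a == m) \sum_i c a * (bern m a lam * lam i)).
  by apply: eq_bigr => a _; rewrite -mulr_sumr -mulr_sumr Hs mulr1.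
rewrite exchange_big /=.
under [RHS]eq_bigr do rewrite mulr_suml.
rewrite [RHS]exchange_big /=; apply: eq_bigr => i _.
rewrite [RHS](bigID (fun a => 0 < a i)%N) /= [X in _ = _ + X]big1 ?addr0; last first.
  by move=> a /andP[_]; rewrite -eqn0Ngt => /eqP ->; rewrite !mul0r.
rewrite [RHS](reindex_onto (fun b => inc b i) (fun a => dec a i)) /=; last first.
  by move=> a /andP[_ h]; rewrite inc_dec.
apply: eq_big => b.
  have [hb|hb] := ltnP (b i) K.
    by rewrite mdeg_inc // incE // eqxx addn1 dec_inc // eqxx !andbT eqSS.
  have -> : (inc b i i : nat) = 0%N.
    by rewrite ffunE eqxx /inord /insubd insubN // ltnS -ltnNge.
  rewrite andbF andFb; apply/negbTE; apply: contraTN hb => /eqP hd.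
  by rewrite -ltnNge (leq_ltn_trans _ hm) // -hd le_mdeg.
move=> /eqP hd.
have hb : (b i < K)%N by rewrite (leq_ltn_trans _ hm) // -hd le_mdeg.
rewrite bern_inc // incE // eqxx addn1 dec_inc //.
by rewrite mulrCA mulrA.
Qed.

End Elev.


Section Wsec.
Variable R : realFieldType.
Variables n K l : nat.
Implicit Types a b : mindex n K.

Definition W (m : nat) a b : R :=
  (l`!)%:R / (m ^_ l)%:R * \prod_i (((a i : nat) ^_ (b i : nat))%:R / ((b i : nat)`!)%:R).

Lemma sum_sub a b : (forall j, b j <= a j)%N ->
  (\sum_j (a j - b j)%N)%N = (mdeg a - mdeg b)%N.
Proof.
move=> h; apply/eqP; rewrite -(eqn_add2r (mdeg b)) subnK; last first.
  by rewrite /mdeg; apply: leq_sum => j _; exact: h.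
by rewrite /mdeg -big_split /=; apply/eqP/eq_bigr => j _; rewrite subnK.
Qed.

Lemma le_eq_deg a b : (forall j, b j <= a j)%N -> mdeg a = mdeg b -> a = b.
Proof.
move=> h e; have := sum_sub h; rewrite e subnn => /eqP; rewrite sum_nat_eq0.
move=> /forallP H; apply/ffunP => j; apply: val_inj; apply/eqP.
by rewrite eqn_leq h andbT -subn_eq0 (implyP (H j)).
Qed.

Lemma Q_zero a b j : (a j < b j)%N ->
  \prod_i (((a i : nat) ^_ (b i : nat))%:R / ((b i : nat)`!)%:R) = 0 :> R.
Proof. by move=> h; rewrite (bigD1 j) //= ffact_small // mul0r mul0r. Qed.

Lemma W_base a b : mdeg a = l -> mdeg b = l -> W l a b = (a == b)%:R.
Proof.
move=> ha hb; have [<-|neq] := eqVneq a b.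
  rewrite /W ffactnn divff ?pnatr_eq0 -?lt0n ?fact_gt0 // mul1r big1 // => i _.
  by rewrite ffactnn divff // pnatr_eq0 -lt0n fact_gt0.
case: (boolP [forall j, b j <= a j]%N) => [/forallP H|].
  by case/eqP: neq; apply: le_eq_deg => [j|]; [exact: H | rewrite ha hb].
rewrite negb_forall => /existsP [j]; rewrite -ltnNge => h.
by rewrite /W (Q_zero h) mulr0.
Qed.

Lemma ffact_dec (x y : nat) : (x * (x.-1) ^_ y = (x - y) * x ^_ y)%N.
Proof.
case: x => [|x] /=; first by rewrite !mul0n.
by rewrite -ffactSS ffactnSr mulnC.
Qed.

Lemma W_step m a b : (l <= m)%N -> mdeg a = m.+1 -> mdeg b = l ->
  \sum_i (a i)%:R / (m.+1)%:R * W m (dec a i) b = W m.+1 a b.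
Proof.
move=> hlm ha hb.
set Q := \prod_i (((a i : nat) ^_ (b i : nat))%:R / ((b i : nat)`!)%:R) : R.
have key : forall i, (a i)%:R * \prod_j (((dec a i j : nat) ^_ (b j : nat))%:R / ((b j : nat)`!)%:R)
    = (a i - b i)%:R * Q :> R.
  move=> i; rewrite /Q (bigD1 i) //= [X in _ = _ * X](bigD1 i) //= decE eqxx subn1.
  have -> : \prod_(j | j != i) (((dec a i j : nat) ^_ (b j : nat))%:R / ((b j : nat)`!)%:R)
     = \prod_(j | j != i) (((a j : nat) ^_ (b j : nat))%:R / ((b j : nat)`!)%:R) :> R.
    by apply: eq_bigr => j /negbTE hj; rewrite decE hj subn0.
  by rewrite !mulrA -!natrM ffact_dec.
have hm0 : (m ^_ l)%:R != 0 :> R by rewrite pnatr_eq0 -lt0n ffact_gt0.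
have hm1 : (m.+1)%:R != 0 :> R by rewrite pnatr_eq0.
transitivity (\sum_i (l`!)%:R / ((m ^_ l)%:R * (m.+1)%:R) * ((a i - b i)%:R * Q) : R).
  apply: eq_bigr => i _; rewrite -key /W; field; by rewrite hm0 addrC natr1 hm1.
rewrite -mulr_sumr -mulr_suml.
case: (boolP [forall j, b j <= a j]%N) => [/forallP H|]; last first.
  rewrite negb_forall => /existsP [j]; rewrite -ltnNge => h.
  by rewrite /Q /W (Q_zero h) !mulr0.
rewrite -natr_sum sum_sub // ha hb /W -/Q.
have e : (m.+1 ^_ l * (m.+1 - l) = m.+1 * m ^_ l)%N by rewrite -ffactnSr ffactSS.
have hl : (m.+1 - l)%:R != 0 :> R by rewrite pnatr_eq0 subn_eq0 -ltnNge ltnS.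
have hm2 : (m.+1 ^_ l)%:R != 0 :> R by rewrite pnatr_eq0 -lt0n ffact_gt0 (leq_trans hlm).
have e' : (m ^_ l)%:R * (m.+1)%:R = (m.+1 ^_ l)%:R * (m.+1 - l)%:R :> R.
  by rewrite -!natrM e mulnC.
rewrite e'; field; by rewrite hl hm2.
Qed.

Lemma coef_base (c0 : mindex n K -> R) a : mdeg a = l ->
  \sum_(b | mdeg b == l) c0 b * W l a b = c0 a.
Proof.
move=> ha; rewrite (bigD1 a) ?ha //= W_base // eqxx mulr1 big1 ?addr0 //.
move=> b /andP[/eqP hb nb]; rewrite W_base // eq_sym (negbTE nb) mulr0 //.
Qed.

Lemma elev_iter (c0 : mindex n K -> R) lam (Hs : \sum_i lam i = 1) m :
  (l <= m <= K)%N ->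
  \sum_(b | mdeg b == l) c0 b * bern l b lam =
  \sum_(a | mdeg a == m) (\sum_(b | mdeg b == l) c0 b * W m a b) * bern m a lam.
Proof.
elim: m => [|m IH] /andP[hl hK].
  move: hl; rewrite leqn0 => /eqP hl0; rewrite hl0.
  apply: eq_bigr => a /eqP ha; have := @coef_base c0 a; rewrite hl0 => -> //.
have [hlm|hlm] := leqP l m; last first.
  have e : l = m.+1 by apply/eqP; rewrite eqn_leq hl hlm.
  rewrite -[in RHS]e; apply: eq_bigr => a /eqP ha; rewrite coef_base // ha e.
rewrite IH ?hlm ?(ltnW hK) // (elev hK) //.
apply: eq_bigr => a /eqP ha; congr (_ * _).
under eq_bigr do rewrite mulr_sumr.
rewrite exchange_big /=; apply: eq_bigr => b /eqP hb.
rewrite -(W_step hlm ha hb) mulr_sumr; apply: eq_bigr => i _.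
by rewrite mulrCA.
Qed.

End Wsec.


Section Uniq.
Variable R : realFieldType.

Lemma sum_bary n (x : 'rV[R]_n) : \sum_i bary x i = 1.
Proof.
have e : forall j, bary x (lift ord0 j) = x ord0 j by move=> j; rewrite /bary liftK.
rewrite big_ord_recl; under eq_bigr do rewrite e.
by rewrite /bary unlift_none subrK.
Qed.

Lemma uniq_coef n K (D : mindex n K -> R) :
  (forall x : 'rV[R]_n, \sum_(a | mdeg a == K) D a * bern K a (bary x) = 0) ->
  forall a, mdeg a == K -> D a = 0.
Proof.
move=> H a ha.
pose E (a : mindex n K) : R :=
  if mdeg a == K then D a * ((K`!)%:R / (\prod_i ((a i : nat)`!))%:R) else 0.
have HE : forall a, E a = 0.
  apply: (@ident_first R K n E (fun y => - \sum_j y j)) => t y ht.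
  set s := t + \sum_j y j.
  have hs : s != 0 by rewrite /s addr_eq0.
  pose x : 'rV[R]_n := \row_j (y j / s).
  have hb : forall i, bary x i = vcons t y i / s.
    move=> i; rewrite /bary /vcons; case: (unlift ord0 i) => [j|]; first by rewrite mxE.
    under eq_bigr do rewrite mxE.
    by rewrite -mulr_suml /s; field.
  transitivity (s ^+ K * \sum_(a | mdeg a == K) D a * bern K a (bary x)); last first.
    by rewrite H mulr0.
  rewrite mulr_sumr [RHS]big_mkcond /=; apply: eq_bigr => b _.
  rewrite /E; case: (boolP (mdeg b == K)) => [/eqP hd|_]; last by rewrite mul0r.
  rewrite /bern; under [X in _ = _ * (_ * (_ * X))]eq_bigr do rewrite hb expr_div_n.
  rewrite prodf_div prodrXr -/(mdeg b) hd.
  have hsK : s ^+ K != 0 by rewrite expf_neq0.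
  by rewrite [RHS]mulrC -!mulrA mulVf // mulr1.
have := HE a; rewrite /E ha => /eqP; rewrite mulf_eq0 => /orP [/eqP //|].
rewrite mulf_eq0 invr_eq0 !pnatr_eq0 !eqn0Ngt fact_gt0 /= prodn_gt0 // => i.
by rewrite fact_gt0.
Qed.

End Uniq.


Section Misc.
Variable R : realFieldType.

Definition zidx n K : mindex n K := [ffun _ => ord0].

Lemma deg0 n K (b : mindex n K) : (mdeg b == 0%N) = (b == zidx n K).
Proof.
apply/idP/eqP => [|->]; last by rewrite /mdeg big1 // => i _; rewrite ffunE.
rewrite /mdeg sum_nat_eq0 => /forallP H; apply/ffunP => i; apply: val_inj.
by rewrite ffunE; apply/eqP; exact: (implyP (H i)).
Qed.

Lemma bpartition n K m (lam : 'I_n.+1 -> R) : (m <= K)%N -> \sum_i lam i = 1 ->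
  \sum_(a : mindex n K | mdeg a == m) bern m a lam = 1.
Proof.
move=> hm Hs.
have := @elev_iter R n K 0 (fun _ => 1) lam Hs m; rewrite hm => /(_ isT).
rewrite (big_pred1 (zidx n K)); last by move=> b; rewrite /= deg0.
rewrite /bern /= big1 ?mul1r; last by move=> i _; rewrite ffunE.
rewrite big1 ?divr1 ?mul1r; last by move=> i _; rewrite ffunE.
rewrite invr1 mulr1 => e; rewrite [RHS]e; apply: eq_bigr => a _; rewrite (@big_pred1 _ _ _ _ (zidx n K) (fun b => mdeg b == 0%N)); last by move=> b; rewrite /= deg0.
have W1 : W R 0 m a (zidx n K) = 1.
  rewrite /W ffactn0 divr1 mul1r big1 // => i _.
  by rewrite ffunE ffactn0 divr1.
by rewrite W1 !mul1r.
Qed.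

Definition rc n K1 K2 (a : mindex n K1) : mindex n K2 := [ffun i => inord (a i)].

Lemma rcE n K1 K2 (a : mindex n K1) i : (a i <= K2)%N -> (rc K2 a i : nat) = a i.
Proof. by move=> h; rewrite ffunE inordK. Qed.

Lemma bern_ext n K1 K2 m (a : mindex n K1) (a' : mindex n K2) (lam : 'I_n.+1 -> R) :
  (forall i, (a i : nat) = (a' i : nat)) -> bern m a lam = bern m a' lam.
Proof.
move=> h; rewrite /bern; congr (_ / _ * _).
  by congr (_%:R); apply: eq_bigr => i _; rewrite h.
by apply: eq_bigr => i _; rewrite h.
Qed.

Lemma mdeg_ext n K1 K2 (a : mindex n K1) (a' : mindex n K2) :
  (forall i, (a i : nat) = (a' i : nat)) -> mdeg a = mdeg a'.
Proof. by move=> h; apply: eq_bigr => i _; rewrite h. Qed.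

Lemma transport n l k (f : mindex n l -> R) (lam : 'I_n.+1 -> R) : (l <= k)%N ->
  \sum_(b : mindex n l | mdeg b == l) f b * bern l b lam =
  \sum_(b : mindex n k | mdeg b == l) f (rc l b) * bern l b lam.
Proof.
move=> hlk.
have hb : forall (b : mindex n l) i, (b i <= k)%N.
  by move=> b i; rewrite (leq_trans _ hlk) // -ltnS.
rewrite [RHS](reindex (@rc n l k)) /=; last first.
  exists (@rc n k l) => b hb'.
    by apply/ffunP => i; apply: val_inj => /=; rewrite !rcE // ?rcE // -ltnS.
  apply/ffunP => i; apply: val_inj => /=; move: hb'; rewrite inE => /eqP hd.
  have hbi : (b i <= l)%N by rewrite -hd le_mdeg.
  by rewrite rcE ?rcE // ?rcE // (leq_trans hbi hlk).
apply: eq_big => b.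
  by rewrite (@mdeg_ext _ _ _ (rc k b) b) // => i; rewrite rcE.
move=> _; rewrite (@bern_ext _ _ _ _ (rc k b) b); last by move=> i; rewrite rcE.
congr (f _ * _); apply/ffunP => i; apply: val_inj => /=.
by rewrite rcE rcE // -ltnS.
Qed.

Definition grid n k (a : mindex n k) : 'rV[R]_n :=
  \row_j ((a (lift ord0 j) : nat)%:R / k%:R).

Lemma bary_grid n k (a : mindex n k) i : (0 < k)%N -> mdeg a = k ->
  bary (grid a) i = (a i : nat)%:R / k%:R.
Proof.
move=> hk ha; case: (unliftP ord0 i) => [j ->|->]; first by rewrite /bary liftK mxE.
rewrite /bary unlift_none; under eq_bigr do rewrite mxE.
rewrite -mulr_suml -natr_sum.
have e : k%:R = (a ord0 : nat)%:R + (\sum_(j < n) (a (lift ord0 j) : nat))%:R :> R.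
  by rewrite -natrD; congr (_%:R); rewrite -[LHS]ha /mdeg big_ord_recl.
have hk' : k%:R != 0 :> R by rewrite pnatr_eq0 -lt0n.
apply: (mulIf hk'); rewrite mulrBl mul1r !mulfVK // [in LHS]e.
by rewrite addrK.
Qed.

Lemma grid_simplex n k (a : mindex n k) : (0 < k)%N -> mdeg a = k -> in_simplex (grid a).
Proof.
move=> hk ha; split => [j|]; first by rewrite mxE divr_ge0 ?ler0n.
have := bary_grid ord0 hk ha; rewrite /bary unlift_none => e.
by rewrite -subr_ge0 e divr_ge0 ?ler0n.
Qed.

Lemma ffact_le_exp (x y : nat) : (x ^_ y <= x ^ y)%N.
Proof.
elim: y => [|y IH]; first by rewrite ffactn0.
by rewrite ffactnSr expnSr leq_mul // leq_subr.
Qed.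

Lemma fall_bound k l : (0 < k)%N -> (l <= k)%N ->
  1 - (l * (l - 1))%:R / (2 * k%:R) <= (k ^_ l)%:R / k%:R ^+ l :> R.
Proof.
move=> hk; elim: l => [|l IH] hl.
  by rewrite mul0n mul0r subr0 ffactn0 expr0 divr1.
have IH' := IH (ltnW hl).
have hk' : 0 < k%:R :> R by rewrite ltr0n.
set s := (l * (l - 1))%:R / (2 * k%:R) : R.
set u := l%:R / k%:R : R.
have hs : 0 <= s by rewrite /s divr_ge0 ?mulr_ge0 ?ler0n.
have hu0 : 0 <= u by rewrite /u divr_ge0 ?ler0n.
have hu1 : u <= 1 by rewrite /u ler_pdivrMr // mul1r ler_nat ltnW.
have e1 : (l.+1 * (l.+1 - 1))%:R / (2 * k%:R) = s + u :> R.
  have en : (l.+1 * (l.+1 - 1) = l * (l - 1) + 2 * l)%N.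
    nia.
  rewrite en natrD natrM /s /u; field; by rewrite gt_eqF.
have e2 : (k ^_ l.+1)%:R / k%:R ^+ l.+1 = (k ^_ l)%:R / k%:R ^+ l * (1 - u) :> R.
  rewrite ffactnSr natrM natrB; last exact: ltnW.
  rewrite exprSr /u.
  have hX : k%:R ^+ l != 0 :> R by rewrite gt_eqF // exprn_gt0.
  have hK : k%:R != 0 :> R by rewrite gt_eqF.
  by field; rewrite hX hK.
rewrite e1 e2.
set P := (k ^_ l)%:R / k%:R ^+ l : R.
apply: le_trans (_ : (1 - s) * (1 - u) <= _); last by rewrite ler_wpM2r // subr_ge0.
have := mulr_ge0 hs hu0.
rewrite mulrBl !mul1r mulrBr mulr1.
lra.
Qed.

End Misc.


Lemma bary_ge0 (R : realFieldType) n (x : 'rV[R]_n) i : in_simplex x -> 0 <= bary x i.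
Proof.
move=> [h1 h2]; rewrite /bary; case: (unlift ord0 i) => [j|]; first exact: h1.
by rewrite subr_ge0.
Qed.

Lemma bern_ge0 (R : realFieldType) n K m (a : mindex n K) (x : 'rV[R]_n) :
  in_simplex x -> 0 <= bern m a (bary x).
Proof.
move=> hx; rewrite /bern mulr_ge0 ?divr_ge0 ?ler0n //.
by apply: prodr_ge0 => i _; rewrite exprn_ge0 // bary_ge0.
Qed.

Lemma claimA (R : realFieldType) n k l (a b : mindex n k) :
  (0 < k)%N -> (l <= k)%N -> mdeg a = k -> mdeg b = l ->
  (k ^_ l)%:R / k%:R ^+ l * W R l k a b <= bern l b (bary (grid R a)).
Proof.
move=> hk hlk ha hb.
have hK : k%:R != 0 :> R by rewrite pnatr_eq0 -lt0n.
have hKl : k%:R ^+ l != 0 :> R by rewrite expf_neq0.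
have hF : (k ^_ l)%:R != 0 :> R by rewrite pnatr_eq0 -lt0n ffact_gt0.
have hB : (\prod_i ((b i : nat)`!))%:R != 0 :> R.
  by rewrite pnatr_eq0 -lt0n prodn_gt0 // => i; rewrite fact_gt0.
have eV : bern l b (bary (grid R a)) =
   (l`!)%:R / ((\prod_i ((b i : nat)`!))%:R * k%:R ^+ l) * (\prod_i ((a i : nat) ^ (b i : nat)))%:R.
  have eP : \prod_i bary (grid R a) i ^+ b i = (\prod_i ((a i : nat) ^ (b i : nat)))%:R / k%:R ^+ l.
    rewrite (eq_bigr (fun i => (a i : nat)%:R ^+ b i / k%:R ^+ b i)); last first.
      by move=> i _; rewrite bary_grid // expr_div_n.
    rewrite prodf_div prodrXr -/(mdeg b) hb natr_prod.
    by congr (_ / _); apply: eq_bigr => i _; rewrite natrX.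
  rewrite /bern eP.
  by field; rewrite hB hKl.
have eW : (k ^_ l)%:R / k%:R ^+ l * W R l k a b =
   (l`!)%:R / ((\prod_i ((b i : nat)`!))%:R * k%:R ^+ l) * (\prod_i ((a i : nat) ^_ (b i : nat)))%:R.
  rewrite /W prodf_div -!natr_prod.
  by field; rewrite hB hKl hF.
rewrite eV eW ler_wpM2l ?ler_nat ?divr_ge0 ?mulr_ge0 ?ler0n ?exprn_ge0 //.
by apply: leq_prod => i _; exact: ffact_le_exp.
Qed.

Unset Implicit Arguments.
Set Strict Implicit.

Theorem corollary5p14 (R : realFieldType) (n l k : nat)
    (p q : 'rV[R]_n -> R)
    (bpl : mindex n l -> R) (bpk : mindex n k -> R)
    (bq : forall j : nat, mindex n j -> R) (pmin : R) :
  bernstein_coeffs p bpl ->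
  bernstein_coeffs p bpk ->
  (forall j, (l <= j)%N -> bernstein_coeffs q (bq j)) ->
  (forall j, (l <= j)%N -> forall a : mindex n j, mdeg a == j -> 0 < bq j a) ->
  (forall x, in_simplex x -> 0 < p x / q x) ->
  (forall x, in_simplex x -> 0 < p x) ->
  is_min_on_simplex p pmin ->
  (l * (l - 1))%:R / 2%:R
    * (\big[Num.max/0]_(a : mindex n l | mdeg a == l) `|bpl a|) / pmin
    < k%:R ->
  (forall a : mindex n k, mdeg a == k -> 0 <= bpk a / bq k a) /\
  (forall i : 'I_n.+1, 0 < bpk (mvertex k i) / bq k (mvertex k i)).
Proof.
move=> Hpl Hpk _ Hqpos _ Hppos [[x0 Hx0 Hpx0] Hmin] Hk.
set M := \big[Num.max/0]_(a : mindex n l | mdeg a == l) `|bpl a| in Hk.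
have pmin_gt0 : 0 < pmin by rewrite -Hpx0 Hppos.
have HM : forall b : mindex n l, mdeg b == l -> `|bpl b| <= M.
  by move=> b hb; rewrite /M (bigD1 b) //= le_max lexx.
have pminM : pmin <= M.
  rewrite -Hpx0 Hpl.
  apply: le_trans (_ : \sum_(b : mindex n l | mdeg b == l) M * bern l b (bary x0) <= _).
    apply: ler_sum => b hb; apply: ler_wpM2r; first exact: bern_ge0.
    exact: le_trans (ler_norm _) (HM b hb).
  by rewrite -mulr_sumr (bpartition (leqnn l) (sum_bary x0)) mulr1.
have M_ge0 : 0 <= M by apply: le_trans (ltW pmin_gt0) pminM.
set A := (l * (l - 1))%:R : R.
have A_ge0 : 0 <= A by rewrite ler0n.
have Hk' : A / 2%:R * (M / pmin) < k%:R by rewrite mulrA.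
have Y1 : 1 <= M / pmin by rewrite ler_pdivlMr // mul1r.
have hA2 : A / 2%:R <= A / 2%:R * (M / pmin).
  by rewrite -[X in X <= _]mulr1 ler_wpM2l // divr_ge0 ?ler0n.
have hk0 : (0 < k)%N.
  by rewrite -(ltr0n R); apply: le_lt_trans Hk'; apply: le_trans hA2; rewrite divr_ge0 ?ler0n.
have hlk : (l <= k)%N.
  case: (leqP l 1) => hl1; first exact: leq_trans hl1 hk0.
  have h2 : (2 * (l - 1))%:R <= A by rewrite /A ler_nat leq_mul2r hl1 orbT.
  have : (l - 1)%:R < k%:R :> R.
    apply: le_lt_trans Hk'; apply: le_trans hA2.
    rewrite ler_pdivlMr ?ltr0n // mulrC -natrM; exact: h2.
  by rewrite ltr_nat; lia.
pose c0 (b : mindex n k) := bpl (rc l b).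
have Hp : forall x, p x = \sum_(b : mindex n k | mdeg b == l) c0 b * bern l b (bary x).
  by move=> x; rewrite Hpl; exact: transport.
pose C (a : mindex n k) := \sum_(b : mindex n k | mdeg b == l) c0 b * W R l k a b.
have hlkk : (l <= k <= k)%N by rewrite hlk leqnn.
have HC : forall a : mindex n k, mdeg a == k -> bpk a = C a.
  move=> a ha; apply/eqP; rewrite -subr_eq0; apply/eqP.
  apply: (@uniq_coef R n k (fun a => bpk a - C a)) ha => x.
  under eq_bigr do rewrite mulrBl.
  rewrite sumrB; apply/eqP; rewrite subr_eq0; apply/eqP.
  rewrite -(elev_iter c0 (sum_bary x) hlkk) -Hp.
  by rewrite Hpk.
have HW : forall a : mindex n k, mdeg a == k -> \sum_(b : mindex n k | mdeg b == l) W R l k a b = 1.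
  move=> a ha; apply/eqP; rewrite -subr_eq0; apply/eqP.
  apply: (@uniq_coef R n k (fun a => \sum_(b : mindex n k | mdeg b == l) W R l k a b - 1)) ha => x.
  under eq_bigr do rewrite mulrBl mul1r.
  rewrite sumrB; apply/eqP; rewrite subr_eq0; apply/eqP.
  have := elev_iter (fun _ => 1) (sum_bary x) hlkk.
  under eq_bigr do rewrite mul1r.
  under [X in _ = X -> _]eq_bigr do (under eq_bigr do rewrite mul1r).
  move=> <-; rewrite !bpartition ?sum_bary //.
have Hpos : forall a : mindex n k, mdeg a == k -> 0 < bpk a.
  move=> a /eqP ha; rewrite HC ?ha //.
  set c := (k ^_ l)%:R / k%:R ^+ l : R.
  have c_gt0 : 0 < c by rewrite divr_gt0 // ?ltr0n ?ffact_gt0 // exprn_gt0 // ltr0n.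
  have hxa := grid_simplex R hk0 ha.
  set V := fun b : mindex n k => bern l b (bary (grid R a)).
  have hV : \sum_(b : mindex n k | mdeg b == l) V b = 1 by rewrite bpartition ?sum_bary.
  have hpx : pmin <= \sum_(b : mindex n k | mdeg b == l) c0 b * V b by rewrite -Hp; exact: Hmin.
  have key : \sum_(b : mindex n k | mdeg b == l) c0 b * V b - C a * c <= M * (1 - c).
    have eR : M * (1 - c) = \sum_(b : mindex n k | mdeg b == l) M * (V b - c * W R l k a b).
      by rewrite -mulr_sumr sumrB -mulr_sumr hV HW ?ha // mulr1.
    have eL : \sum_(b : mindex n k | mdeg b == l) c0 b * V b - C a * c
        = \sum_(b : mindex n k | mdeg b == l) c0 b * (V b - c * W R l k a b).
      rewrite /C mulr_suml -sumrB; apply: eq_bigr => b _.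
      by rewrite mulrBr -mulrA [W R l k a b * c]mulrC.
    rewrite eL eR; apply: ler_sum => b /eqP hb.
    have hA := claimA R hk0 hlk ha hb.
    apply: ler_wpM2r; first by rewrite subr_ge0.
    apply: le_trans (ler_norm _) _; apply: HM.
    by rewrite /mdeg; apply/eqP; rewrite -[RHS]hb; apply: eq_bigr => i _; rewrite rcE // -hb le_mdeg.
  have fb := fall_bound R hk0 hlk.
  have hT : M * (1 - c) < pmin.
    apply: le_lt_trans (_ : M * (A / (2 * k%:R)) < _).
      by apply: ler_wpM2l => //; rewrite lerBlDr addrC -lerBlDr.
    have hk' : 0 < k%:R :> R by rewrite ltr0n.
    have e : M * (A / (2 * k%:R)) = (A / 2%:R * (M / pmin)) * (pmin / k%:R).
      by field; rewrite !gt_eqF // ?ltr0n.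
    have hpk : 0 < pmin / k%:R by rewrite divr_gt0.
    rewrite e; apply: lt_le_trans (_ : k%:R * (pmin / k%:R) <= _).
      by rewrite ltr_pM2r.
    by rewrite mulrC divfK // gt_eqF.
  have : 0 < C a * c by lra.
  by rewrite pmulr_lgt0.
split => [a ha | i].
  by rewrite divr_ge0 // ltW // ?Hpos // Hqpos.
have hv : mdeg (mvertex k i) == k.
  rewrite /mdeg (bigD1 i) //= big1 => [|j /negbTE hj]; last by rewrite ffunE hj.
  by rewrite ffunE eqxx addn0.
by rewrite divr_gt0 ?Hpos // Hqpos.
Qed.
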